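(* Let $X \subseteq \omega$ and let $\mathcal{A}$ be a pca with a strongly $X$-effectively pca-valued partial numbering $\gamma$. Then $\mathcal{A}$ is embeddable in $\mathcal{K}_2^X$ and hence in $\mathcal{K}_2$.
   Context: A pca is a set with a partial binary application operation containing distinct $\mathrm{s},\mathrm{k}$ with $\mathrm{k}ab\downarrow=a$, $\mathrm{s}ab\downarrow$, $\mathrm{s}abc\simeq(ac)(bc)$. An embedding of pcas is an injective map $f$ with: if $ab$ is defined then $f(a)f(b)$ is defined and equals $f(ab)$. A partial numbering of a set $S$ is a surjective partial function $\gamma:\omega\rightharpoonup S$. For a pca $\mathcal{A}$, $\gamma$ is $X$-effectively pca-valued if there is a partial $X$-computable $\psi:\omega^2\rightharpoonup\omega$ such that for all $n,m\in\mathrm{dom}(\gamma)$, if $\gamma(n)\gamma(m)$ is defined then $\gamma(\psi(n,m))=\gamma(n)\gamma(m)$. It is strongly $X$-effectively pca-valued if such a $\psi$ can be chosen so that moreover, for all $n,m,k,l\in\mathrm{dom}(\gamma)$, if $\gamma(n)\gamma(m)$ and $\gamma(k)\gamma(l)$ are both defined and equal then $\psi(n,m)=\psi(k,l)$. $\mathcal{K}_2$: elements are all total functions $g:\omega\to\omega$, with $g\cdot h$ the function $n\mapsto\Phi^{g\oplus h}_{g(0)}(n)$ ($\Phi_e$ the $e$-th Turing functional, $(g\oplus h)(2n)=g(n)$, $(g\oplus h)(2n+1)=h(n)$), defined iff this function is total; $\mathcal{K}_2^X$ is the sub-pca of $X$-computable functions. *)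

(* Defs.v *)
From mathcomp Require Import all_boot.
Set Implicit Arguments. Unset Strict Implicit. Unset Printing Implicit Defensive.

Definition appo (A : Type) (app : A -> A -> option A) (x y : option A) : option A :=
  match x, y with Some a, Some b => app a b | _, _ => None end.

(* (A, app) is a pca: there are distinct s, k with
   k a b defined and = a, s a b defined, s a b c ~= (a c)(b c)
   (Kleene equality = equality of option values). *)
Definition is_pca (A : Type) (app : A -> A -> option A) : Prop :=
  exists s k : A, s <> k /\
    (forall a b, appo app (appo app (Some k) (Some a)) (Some b) = Some a) /\
    (forall a b, appo app (appo app (Some s) (Some a)) (Some b) <> None) /\
    (forall a b c,
       appo app (appo app (appo app (Some s) (Some a)) (Some b)) (Some c) =
       appo app (appo app (Some a) (Some c)) (appo app (Some b) (Some c))).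

Definition npair (a b : nat) : nat := ((a + b) * (a + b).+1)./2 + b.

Inductive prog : Type :=
| PZero | PSucc | PId | PProj1 | PProj2 | POracle
| PComp of prog & prog
| PPair of prog & prog
| PPrec of prog & prog         (* h <x,0> = f x ; h <x,n+1> = g <x,<n,h <x,n>>> *)
| PMu of prog.                 (* x |-> least n with f <x,n> = 0 (all earlier defined) *)

Inductive eval (o : nat -> nat) : prog -> nat -> nat -> Prop :=
| ev_zero x : eval o PZero x 0
| ev_succ x : eval o PSucc x x.+1
| ev_id x : eval o PId x x
| ev_proj1 a b : eval o PProj1 (npair a b) a
| ev_proj2 a b : eval o PProj2 (npair a b) b
| ev_oracle x : eval o POracle x (o x)
| ev_comp f g x y z : eval o g x y -> eval o f y z -> eval o (PComp f g) x z
| ev_pair f g x y z : eval o f x y -> eval o g x z -> eval o (PPair f g) x (npair y z)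
| ev_prec0 f g x y : eval o f x y -> eval o (PPrec f g) (npair x 0) y
| ev_precS f g x n y z :
    eval o (PPrec f g) (npair x n) y -> eval o g (npair x (npair n y)) z ->
    eval o (PPrec f g) (npair x n.+1) z
| ev_mu f x n :
    eval o f (npair x n) 0 ->
    (forall i, i < n -> exists v, v <> 0 /\ eval o f (npair x i) v) ->
    eval o (PMu f) x n.

(* Goedel numbering of programs through the generic countable trees. *)
Fixpoint tree_of_prog (p : prog) : GenTree.tree nat :=
  match p with
  | PZero => GenTree.Node 0 [::]
  | PSucc => GenTree.Node 1 [::]
  | PId => GenTree.Node 2 [::]
  | PProj1 => GenTree.Node 3 [::]
  | PProj2 => GenTree.Node 4 [::]
  | POracle => GenTree.Node 5 [::]
  | PComp f g => GenTree.Node 6 [:: tree_of_prog f; tree_of_prog g]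
  | PPair f g => GenTree.Node 7 [:: tree_of_prog f; tree_of_prog g]
  | PPrec f g => GenTree.Node 8 [:: tree_of_prog f; tree_of_prog g]
  | PMu f => GenTree.Node 9 [:: tree_of_prog f]
  end.

Fixpoint prog_of_tree (t : GenTree.tree nat) : prog :=
  match t with
  | GenTree.Node 0 _ => PZero
  | GenTree.Node 1 _ => PSucc
  | GenTree.Node 2 _ => PId
  | GenTree.Node 3 _ => PProj1
  | GenTree.Node 4 _ => PProj2
  | GenTree.Node 5 _ => POracle
  | GenTree.Node 6 [:: f; g] => PComp (prog_of_tree f) (prog_of_tree g)
  | GenTree.Node 7 [:: f; g] => PPair (prog_of_tree f) (prog_of_tree g)
  | GenTree.Node 8 [:: f; g] => PPrec (prog_of_tree f) (prog_of_tree g)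
  | GenTree.Node 9 [:: f] => PMu (prog_of_tree f)
  | _ => PZero
  end.

(* The e-th program (every program occurs, since pickle is injective). *)
Definition prog_of_nat (e : nat) : prog :=
  match (unpickle e : option (GenTree.tree nat)) with
  | Some t => prog_of_tree t
  | None => PZero
  end.

Definition Phi (o : nat -> nat) (e n m : nat) : Prop := eval o (prog_of_nat e) n m.

Definition chi (X : pred nat) : nat -> nat := fun n => nat_of_bool (X n).

Definition Xcomputable (X : pred nat) (f : nat -> nat) : Prop :=
  exists e, forall n, Phi (chi X) e n (f n).

Definition join (g h : nat -> nat) : nat -> nat :=
  fun n => if odd n then h n./2 else g n./2.

Definition K2app (g h r : nat -> nat) : Prop :=
  forall n, Phi (join g h) (g 0) n (r n).

Definition partial_numbering (A : Type) (gamma : nat -> option A) : Prop :=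
  forall a : A, exists n, gamma n = Some a.

(* psi (partial X-computable of two arguments) := n,m |-> Phi^X_e(<n,m>). *)
Definition strongly_X_effectively_pca_valued (X : pred nat) (A : Type)
    (app : A -> A -> option A) (gamma : nat -> option A) : Prop :=
  exists e : nat,
    (forall n m a b c, gamma n = Some a -> gamma m = Some b -> app a b = Some c ->
       exists k, Phi (chi X) e (npair n m) k /\ gamma k = Some c) /\
    (forall n m k l a b a' b' c k1 k2,
       gamma n = Some a -> gamma m = Some b -> gamma k = Some a' -> gamma l = Some b' ->
       app a b = Some c -> app a' b' = Some c ->
       Phi (chi X) e (npair n m) k1 -> Phi (chi X) e (npair k l) k2 -> k1 = k2).

Definition K2_embedding (A : Type) (app : A -> A -> option A) (f : A -> nat -> nat) : Prop :=
  injective f /\ (forall a b c, app a b = Some c -> K2app (f a) (f b) (f c)).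

(* Main.v *)
Require Import Defs.
From mathcomp Require Import all_boot.
From mathcomp Require Import zify.
From Stdlib Require Import ClassicalEpsilon.
Set Implicit Arguments. Unset Strict Implicit.

Lemma ptree p : prog_of_tree (tree_of_prog p) = p.
Proof. by elim: p => //= [f -> g ->|f -> g ->|f -> g ->|f ->]. Qed.

Lemma Phi_prog o p n m : eval o p n m -> Phi o (pickle (tree_of_prog p)) n m.
Proof. by rewrite /Phi /prog_of_nat pickleK ptree. Qed.

Fixpoint Const k := match k with 0 => PZero | k.+1 => PComp PSucc (Const k) end.

Lemma evConst o k x : eval o (Const k) x k.
Proof. elim: k => [|k IH] /=; [exact: ev_zero | exact: ev_comp IH (ev_succ _ _)]. Qed.

Lemma ev_eq o p x y y' : eval o p x y -> y = y' -> eval o p x y'.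
Proof. by move=> H <-. Qed.

Lemma ev_prec_all o F G x (g : nat -> nat) : eval o F x (g 0) ->
  (forall k h, eval o G (npair x (npair k h)) (g k.+1)) ->
  forall k, eval o (PPrec F G) (npair x k) (g k).
Proof.
move=> HF HG; elim=> [|k IH]; first exact: ev_prec0.
exact: ev_precS IH (HG _ _).
Qed.

Definition Dbl := PComp (PPrec PZero (PComp PSucc (PComp PSucc (PComp PProj2 PProj2))))
   (PPair PZero PId).

Lemma evDbl o i : eval o Dbl i i.*2.
Proof.
apply: ev_comp; first exact: ev_pair (ev_zero _ _) (ev_id _ _).
elim: i => [|k IH]; first exact: ev_prec0 (ev_zero _ _).
apply: ev_precS IH _.
rewrite doubleS.
apply: (ev_comp (y := k.*2.+1)); last exact: ev_succ.
apply: (ev_comp (y := k.*2)); last exact: ev_succ.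
apply: (ev_comp (y := npair k k.*2)); [exact: ev_proj2 | exact: ev_proj2].
Qed.

Definition D := PComp PSucc (PComp PSucc Dbl).
Definition XO := PComp PProj2 (PComp POracle D).

Fixpoint rel p := match p with
  | POracle => XO
  | PComp f g => PComp (rel f) (rel g)
  | PPair f g => PPair (rel f) (rel g)
  | PPrec f g => PPrec (rel f) (rel g)
  | PMu f => PMu (rel f)
  | q => q end.

Lemma evrel (X : pred nat) o : (forall i, eval o XO i (chi X i)) ->
  forall p x y, eval (chi X) p x y -> eval o (rel p) x y.
Proof.
move=> HO; fix IH 4; intros p x y H; destruct H; simpl.
- exact: ev_zero.
- exact: ev_succ.
- exact: ev_id.
- exact: ev_proj1.
- exact: ev_proj2.
- exact: HO.
- exact: ev_comp (IH _ _ _ H) (IH _ _ _ H0).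
- exact: ev_pair (IH _ _ _ H) (IH _ _ _ H0).
- exact: ev_prec0 (IH _ _ _ H).
- exact: ev_precS (IH _ _ _ H) (IH _ _ _ H0).
- apply: ev_mu; first exact: (IH _ _ _ H).
  intros i hi; destruct (H0 i hi) as [v [hv hev]]; exists v; split;
   [exact hv | exact (IH _ _ _ hev)].
Qed.

Lemma npair_inj1 a b c : npair a c = npair b c -> a = b.
Proof.
have lt : forall a b, a < b -> npair a c < npair b c.
  move=> {}a {}b ab; rewrite /npair -!divn2.
  have : (a + c) * (a + c).+1 + 2 <= (b + c) * (b + c).+1.
    have h1 : (a + c).+1 <= b + c by lia.
    have := leq_mul h1 (leqnSn (b + c)); nia.
  set u := _ * _; set w := _ * _; lia.
move=> E; case: (ltngtP a b) => // H; move: (lt _ _ H); rewrite E ltnn //.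
Qed.

Theorem theorem6p1 (X : pred nat) (A : Type) (app : A -> A -> option A)
    (gamma : nat -> option A) :
  is_pca app ->
  partial_numbering gamma ->
  strongly_X_effectively_pca_valued X app gamma ->
  (exists f : A -> nat -> nat, K2_embedding app f /\ (forall a, Xcomputable X (f a))) /\
  (exists f : A -> nat -> nat, K2_embedding app f).
Proof.
move=> [s [k0 [_ [hk _]]]] pn [e [Hex Hstr]].
pose P c k := gamma k = Some c /\ forall n m a b, gamma n = Some a -> gamma m = Some b ->
   app a b = Some c -> Phi (chi X) e (npair n m) k.
have HP : forall c, exists k, P c k.
  move=> c; have := hk c c; rewrite /=.
  case E1: (app k0 c) => [kc|] //= E2.
  have [n Hn] := pn kc; have [m Hm] := pn c.
  have [k1 [Hk1 Gk1]] := Hex _ _ _ _ _ Hn Hm E2.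
  exists k1; split => // n' m' a' b' Hn' Hm' E'.
  have [k2 [Hk2 _]] := Hex _ _ _ _ _ Hn' Hm' E'.
  by rewrite (Hstr _ _ _ _ _ _ _ _ _ _ _ Hn Hm Hn' Hm' E2 E' Hk1 Hk2).
pose na c := proj1_sig (constructive_indefinite_description _ (HP c)).
have Hna c : P c (na c) := proj2_sig (constructive_indefinite_description _ (HP c)).
pose Base := PComp POracle PZero.
pose Vprog := PComp (rel (prog_of_nat e)) (PPair (PComp PProj1 (PComp POracle (Const 2)))
     (PComp PProj1 (PComp POracle (Const 3)))).
pose G := PPair Vprog (PComp XO (PComp PProj1 PProj2)).
pose P0 := PComp (PPrec Base G) (PPair PId PId).
pose e0 := pickle (tree_of_prog P0).
pose f (a : A) (x : nat) := if x is n.+1 then npair (na a) (chi X n) else e0.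
have finj : injective f.
  move=> a b E; have := congr1 (fun g => g 1) E; rewrite /f => /npair_inj1 E1.
  have := (Hna a).1; have := (Hna b).1; rewrite E1 => -> []; done.
have femb : K2_embedding app f.
  split => // a b c Eab n; rewrite /f /=.
  apply: Phi_prog; set o := join _ _.
  have o2 : o 2 = npair (na a) (chi X 0) by [].
  have o3 : o 3 = npair (na b) (chi X 0) by [].
  have HXO : forall i, eval o XO i (chi X i).
    move=> i; apply: (ev_comp (y := npair (na a) (chi X i))); last exact: ev_proj2.
    apply: (ev_comp (y := i.*2.+2)).
      apply: (ev_comp (y := i.*2.+1)); last exact: ev_succ.
      apply: (ev_comp (y := i.*2)); [exact: evDbl | exact: ev_succ].
    apply: ev_eq; first exact: ev_oracle.
    by rewrite /o /join /= odd_double doubleK.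
  have HV : forall x, eval o Vprog x (na c).
    move=> x; apply: ev_comp; last first.
      apply: (evrel HXO); apply: (Hna c).2 Eab; [exact: (Hna a).1 | exact: (Hna b).1].
    apply: ev_pair; (apply: ev_comp; [apply: ev_comp; [exact: evConst| exact: ev_oracle]|]).
    + rewrite o2; exact: ev_proj1.
    + rewrite o3; exact: ev_proj1.
  apply: ev_comp; first exact: ev_pair (ev_id _ _) (ev_id _ _).
  apply: (ev_prec_all (g := f c)).
    apply: ev_comp; [exact: ev_zero | exact: ev_oracle].
  move=> k h; apply: ev_pair; first exact: HV.
  apply: ev_comp; last exact: HXO.
  apply: ev_comp; [exact: ev_proj2 | exact: ev_proj1].
split; last by exists f.
exists f; split => // a.
pose Ga := PPair (Const (na a)) (PComp POracle (PComp PProj1 PProj2)).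
exists (pickle (tree_of_prog (PComp (PPrec (Const e0) Ga) (PPair PId PId)))) => n.
apply: Phi_prog.
apply: ev_comp; first exact: ev_pair (ev_id _ _) (ev_id _ _).
apply: (ev_prec_all (g := f a)); first exact: evConst.
move=> k h; apply: ev_pair; first exact: evConst.
apply: ev_comp; last exact: ev_oracle.
apply: ev_comp; [exact: ev_proj2 | exact: ev_proj1].
Qed.
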